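(* Let $(S,T)$ be a connected triangulated surface (closed or with boundary) with edges $e_1,\dots,e_m$ and admissible metric space $\Omega_u$, and let $\bar{\mathbf w}=(\bar w_1,\dots,\bar w_m)\in\mathbb{R}^m$. Suppose there exists $\bar{\mathbf u}\in\Omega_u$ whose cotangent edge weights are $\bar{\mathbf w}$, i.e. $w_i(\bar{\mathbf u})=\bar w_i$ for all $i$. Then $\bar{\mathbf u}$ is the unique global minimizer on $\Omega_u$ of the energy $$\mathcal{E}(\mathbf u)=\int_{(1,\dots,1)}^{\mathbf u}\sum_{i=1}^m\big(\bar w_i-w_i(\mu)\big)\,d\mu_i,$$ the integral being taken along any piecewise smooth path in $\Omega_u$.
   Context: Admissible metric space: $\Omega_u=\{u\in\mathbb{R}^m_{>0}: \sum_k u_k=m$, and for every face with edges $e_a,e_b,e_c$, $(\sqrt{u_a},\sqrt{u_b},\sqrt{u_c})$ satisfies the strict triangle inequalities$\}$; $u$ corresponds to the Euclidean polyhedral metric with edge lengths $d_k=\sqrt{2u_k}$. $w_i(u)$ is the cotangent edge weight of $e_i$ in that metric: for an interior edge with opposite angles $\alpha,\beta$ in its two adjacent faces, $w_i=\tfrac12(\cot\alpha+\cot\beta)$; for a boundary edge with opposite angle $\alpha$, $w_i=\tfrac12\cot\alpha$. *)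

(* Defs.v *)
From Stdlib Require Import Reals Lra List Arith.
Import ListNotations.
Open Scope R_scope.

Definition sumR (m : nat) (f : nat -> R) : R :=
  fold_right Rplus 0 (map f (seq 0 m)).

(* Edges are e_0,...,e_{m-1} (indices < m).  A face is given by the
   triple of its three edges (a,b,c). *)
Definition face := (nat * nat * nat)%type.

Definition face_edges (f : face) : list nat :=
  let '(a, b, c) := f in [a; b; c].

Definition edge_incidence (F : list face) (i : nat) : nat :=
  fold_right plus 0%nat
    (map (fun f => length (filter (fun e => Nat.eqb e i) (face_edges f))) F).

Definition faces_adjacent (F : list face) (x y : nat) : Prop :=
  (x < length F)%nat /\ (y < length F)%nat /\
  exists e, In e (face_edges (nth x F (0,0,0)%nat)) /\
            In e (face_edges (nth y F (0,0,0)%nat)).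

(* Connected triangulated surface (closed or with boundary) with m edges and
   face list F: every face has three distinct edges among e_0..e_{m-1};
   every edge lies on exactly one face side (boundary edge) or on exactly
   two face sides (interior edge); the face-adjacency graph is connected. *)
Definition triangulated_surface (m : nat) (F : list face) : Prop :=
  F <> nil /\
  (forall a b c, In (a, b, c) F ->
     (a < m)%nat /\ (b < m)%nat /\ (c < m)%nat /\ a <> b /\ b <> c /\ a <> c) /\
  (forall i, (i < m)%nat -> edge_incidence F i = 1%nat \/ edge_incidence F i = 2%nat) /\
  (forall x y, (x < length F)%nat -> (y < length F)%nat ->
     Relation_Operators.clos_refl_trans nat (faces_adjacent F) x y).

Definition strict_triangle (x y z : R) : Prop :=
  x < y + z /\ y < x + z /\ z < x + y.

Definition in_Omega (m : nat) (F : list face) (u : nat -> R) : Prop :=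
  (forall k, (k < m)%nat -> 0 < u k) /\
  sumR m u = INR m /\
  (forall a b c, In (a, b, c) F ->
     strict_triangle (sqrt (u a)) (sqrt (u b)) (sqrt (u c))).

Definition edge_len (u : nat -> R) (k : nat) : R := sqrt (2 * u k).

(* angle opposite the side of length x in a Euclidean triangle with side
   lengths x, y, z (law of cosines) *)
Definition opp_angle (x y z : R) : R :=
  acos ((y * y + z * z - x * x) / (2 * y * z)).

Definition cot (t : R) : R := cos t / sin t.

Definition face_weight (u : nat -> R) (f : face) (i : nat) : R :=
  let '(a, b, c) := f in
  let da := edge_len u a in
  let db := edge_len u b in
  let dc := edge_len u c in
  (if Nat.eqb a i then / 2 * cot (opp_angle da db dc) else 0) +
  (if Nat.eqb b i then / 2 * cot (opp_angle db da dc) else 0) +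
  (if Nat.eqb c i then / 2 * cot (opp_angle dc da db) else 0).

(* w_i(u): interior edge -> (cot alpha + cot beta)/2, boundary -> cot alpha/2 *)
Definition cot_weight (F : list face) (u : nat -> R) (i : nat) : R :=
  fold_right Rplus 0 (map (fun f => face_weight u f i) F).

Definition integral_is (f : R -> R) (a b I : R) : Prop :=
  exists pr : Riemann_integrable f a b, RiemannInt pr = I.

(* Piecewise smooth: there are knots
   0 = t_0 < t_1 < ... < t_k = 1 and on each [t_j, t_{j+1}] gamma coincides
   with a C^1 map p_j (with derivative dp_j). *)
Definition pw_path_integral (m : nat) (Om : (nat -> R) -> Prop)
    (omega : (nat -> R) -> nat -> R) (x y : nat -> R) (I : R) : Prop :=
  exists (gamma : R -> nat -> R) (k : nat) (t : nat -> R)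
         (p dp : nat -> R -> nat -> R) (Ij : nat -> R),
    (1 <= k)%nat /\ t 0%nat = 0 /\ t k = 1 /\
    (forall j, (j < k)%nat -> t j < t (S j)) /\
    (forall i, (i < m)%nat -> gamma 0 i = x i /\ gamma 1 i = y i) /\
    (forall s, 0 <= s <= 1 -> Om (gamma s)) /\
    (forall j, (j < k)%nat ->
       (forall i, (i < m)%nat ->
          (forall s, derivable_pt_lim (fun r => p j r i) s (dp j s i)) /\
          continuity (fun r => dp j r i)) /\
       (forall s, t j <= s <= t (S j) -> forall i, (i < m)%nat -> gamma s i = p j s i) /\
       integral_is (fun s => sumR m (fun i => omega (p j s) i * dp j s i))
                   (t j) (t (S j)) (Ij j)) /\
    I = fold_right Rplus 0 (map Ij (seq 0 k)).

Definition ones : nat -> R := fun _ => 1.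

(* Main.v *)
Require Import Defs.
From Stdlib Require Import Reals Lra Psatz List Arith Lia Classical.
Import ListNotations.
Open Scope R_scope.

Lemma fold_Rplus_acc (l : list R) (a : R) : fold_right Rplus a l = fold_right Rplus 0 l + a.
Proof. induction l; simpl; [lra|]. rewrite IHl; lra. Qed.

Lemma sumR_0 f : sumR 0 f = 0.
Proof. reflexivity. Qed.

Lemma sumR_S m f : sumR (S m) f = sumR m f + f m.
Proof.
  unfold sumR. rewrite seq_S, map_app, fold_right_app. simpl.
  rewrite fold_Rplus_acc. lra.
Qed.

Lemma sumR_ext m f g : (forall i, (i < m)%nat -> f i = g i) -> sumR m f = sumR m g.
Proof.
  induction m; intros H; [reflexivity|]. rewrite !sumR_S, IHm, H; auto.
Qed.

Lemma sumR_plus m f g : sumR m (fun i => f i + g i) = sumR m f + sumR m g.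
Proof. induction m; [simpl; unfold sumR; simpl; lra|]. rewrite !sumR_S, IHm; lra. Qed.

Lemma sumR_minus m f g : sumR m (fun i => f i - g i) = sumR m f - sumR m g.
Proof. induction m; [unfold sumR; simpl; lra|]. rewrite !sumR_S, IHm; lra. Qed.

Lemma sumR_zero m : sumR m (fun _ => 0) = 0.
Proof. induction m; [reflexivity|]. rewrite sumR_S, IHm; lra. Qed.

Lemma sumR_ind m a g : (a < m)%nat ->
  sumR m (fun i => if Nat.eqb a i then g i else 0) = g a.
Proof.
  induction m; intros H; [lia|]. rewrite sumR_S.
  destruct (Nat.eq_dec a m) as [->|Hne].
  - rewrite Nat.eqb_refl. rewrite (sumR_ext _ _ (fun _ => 0)).
    + rewrite sumR_zero; lra.
    + intros i Hi. destruct (Nat.eqb_spec m i); [lia|reflexivity].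
  - rewrite IHm by lia. destruct (Nat.eqb_spec a m); [lia|lra].
Qed.

Lemma sumR_scal m c f : sumR m (fun i => c * f i) = c * sumR m f.
Proof. induction m; [unfold sumR; simpl; lra|]. rewrite !sumR_S, IHm; lra. Qed.

Definition LF (F : list face) (h : face -> R) : R := fold_right Rplus 0 (map h F).

Lemma LF_cons f F h : LF (f :: F) h = h f + LF F h.
Proof. reflexivity. Qed.

Lemma LF_ext F h1 h2 : (forall f, In f F -> h1 f = h2 f) -> LF F h1 = LF F h2.
Proof.
  induction F; intros H; [reflexivity|]. rewrite !LF_cons, H, IHF; simpl; auto.
  intros; apply H; simpl; auto.
Qed.

Lemma LF_minus F h1 h2 : LF F (fun f => h1 f - h2 f) = LF F h1 - LF F h2.
Proof. induction F; [unfold LF; simpl; lra|]. rewrite !LF_cons, IHF; lra. Qed.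

Lemma sumR_LF m F g :
  sumR m (fun i => LF F (fun f => g f i)) = LF F (fun f => sumR m (g f)).
Proof.
  induction F.
  - unfold LF; simpl. apply sumR_zero.
  - rewrite LF_cons. rewrite (sumR_ext _ _ (fun i => g a i + LF F (fun f => g f i))).
    + rewrite sumR_plus, IHF. reflexivity.
    + intros; reflexivity.
Qed.

Definition Qf (x y z : R) := 2*(x*y+y*z+z*x) - x*x - y*y - z*z.
Definition Bf (v1 v2 v3 x1 x2 x3 : R) := (v2+v3-v1)*x1 + (v1+v3-v2)*x2 + (v1+v2-v3)*x3.

Lemma Qf_sym1 x y z : Qf y x z = Qf x y z. Proof. unfold Qf; ring. Qed.
Lemma Qf_sym2 x y z : Qf z x y = Qf x y z. Proof. unfold Qf; ring. Qed.
Lemma ident v1 v2 v3 x1 x2 x3 : let Sv := v1+v2+v3 in let Sx := x1+x2+x3 in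
  Sv*Sv*((Bf v1 v2 v3 x1 x2 x3)^2 - Qf v1 v2 v3 * Qf x1 x2 x3) =
  2*Qf v1 v2 v3 * ((Sv*x1 - Sx*v1)^2 + (Sv*x2-Sx*v2)^2 + (Sv*x3-Sx*v3)^2)
  + 4*(v1*(Sv*x1 - Sx*v1) + v2*(Sv*x2-Sx*v2) + v3*(Sv*x3-Sx*v3))^2.
Proof. intros. unfold Sv, Sx, Qf, Bf. ring. Qed.
Lemma heron p q r : Qf (p*p) (q*q) (r*r) = (p+q+r)*(-p+q+r)*(p-q+r)*(p+q-r).
Proof. unfold Qf; ring. Qed.
Lemma Bpos v1 v2 v3 x1 x2 x3 : 0<v1 -> 0<v2 -> 0<v3 -> 0<x1 -> 0<x2 -> 0<x3 ->
  0 < Qf v1 v2 v3 -> 0 < Qf x1 x2 x3 -> 0 < Bf v1 v2 v3 x1 x2 x3.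
Proof.
  intros. set (Sv := v1+v2+v3). set (Sx := x1+x2+x3).
  set (d1 := v1 - Sv/3). set (d2 := v2 - Sv/3). set (d3 := v3 - Sv/3).
  set (e1 := x1 - Sx/3). set (e2 := x2 - Sx/3). set (e3 := x3 - Sx/3).
  assert (HQv : 3*Qf v1 v2 v3 = Sv*Sv - 6*(d1*d1+d2*d2+d3*d3)) by (unfold d1,d2,d3,Sv,Qf; field).
  assert (HQx : 3*Qf x1 x2 x3 = Sx*Sx - 6*(e1*e1+e2*e2+e3*e3)) by (unfold e1,e2,e3,Sx,Qf; field).
  assert (HB : 3*Bf v1 v2 v3 x1 x2 x3 = Sv*Sx - 6*(d1*e1+d2*e2+d3*e3)) by (unfold d1,d2,d3,e1,e2,e3,Sv,Sx,Bf; field).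
  assert (CS : (d1*e1+d2*e2+d3*e3)*(d1*e1+d2*e2+d3*e3) <= (d1*d1+d2*d2+d3*d3)*(e1*e1+e2*e2+e3*e3)).
  { assert (E: (d1*d1+d2*d2+d3*d3)*(e1*e1+e2*e2+e3*e3) - (d1*e1+d2*e2+d3*e3)*(d1*e1+d2*e2+d3*e3) = (d1*e2-d2*e1)^2+(d1*e3-d3*e1)^2+(d2*e3-d3*e2)^2) by ring.
    assert (0 <= (d1*e2-d2*e1)^2+(d1*e3-d3*e1)^2+(d2*e3-d3*e2)^2) by (repeat apply Rplus_le_le_0_compat; apply pow2_ge_0). lra. }
  assert (0 <= d1*d1+d2*d2+d3*d3) by nra. assert (0 <= e1*e1+e2*e2+e3*e3) by nra.
  assert (0 < Sv) by (unfold Sv; lra). assert (0 < Sx) by (unfold Sx; lra).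
  revert CS HQv HQx HB H7 H8 H9 H10 H5 H6.
  generalize (d1*e1+d2*e2+d3*e3) (d1*d1+d2*d2+d3*d3) (e1*e1+e2*e2+e3*e3) (Qf v1 v2 v3) (Qf x1 x2 x3) (Bf v1 v2 v3 x1 x2 x3).
  intros Z N M Qv Qx B CS HQv HQx HB HN HM HSv HSx HQv0 HQx0.
  assert (A1 : 6*N < Sv*Sv) by lra. assert (A2 : 6*M < Sx*Sx) by lra.
  assert (36*(N*M) < (Sv*Sx)*(Sv*Sx)) by nra.
  assert (HZ: 36*(Z*Z) < (Sv*Sx)*(Sv*Sx)) by lra.
  assert (0 < Sv*Sx) by nra.
  assert (6*Z < Sv*Sx). { destruct (Rlt_or_le (6*Z) (Sv*Sx)) as [h|h]; [exact h|]. nra. }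
  lra.
Qed.

Lemma cot_formula x y z : 0<x->0<y->0<z->0<Qf x y z ->
  /2 * cot (opp_angle (sqrt (2*x)) (sqrt (2*y)) (sqrt(2*z))) = (y+z-x)/(2*sqrt(Qf x y z)).
Proof.
  intros hx hy hz hq. unfold opp_angle, cot.
  assert (Ey: sqrt (2*y) * sqrt (2*y) = 2*y) by (apply sqrt_sqrt; lra).
  assert (Ez: sqrt (2*z) * sqrt (2*z) = 2*z) by (apply sqrt_sqrt; lra).
  assert (Ex: sqrt (2*x) * sqrt (2*x) = 2*x) by (apply sqrt_sqrt; lra).
  assert (py: 0 < sqrt (2*y)) by (apply sqrt_lt_R0; lra).
  assert (pz: 0 < sqrt (2*z)) by (apply sqrt_lt_R0; lra).
  set (Y := sqrt (2*y)) in *. set (Z := sqrt (2*z)) in *. set (X := sqrt (2*x)) in *.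
  assert (EC: (Y*Y + Z*Z - X*X)/(2*Y*Z) = (y+z-x)/(Y*Z)) by (rewrite Ex, Ey, Ez; field; lra).
  rewrite EC. set (C := (y+z-x)/(Y*Z)).
  assert (HS : 1 - C² = Qf x y z / (Y*Z)^2).
  { assert (W : (Y*Z)^2 = 4*y*z) by (replace ((Y*Z)^2) with ((Y*Y)*(Z*Z)) by ring; rewrite Ey, Ez; ring).
    assert (HS': 1 - C² = ((Y*Z)^2 - (y+z-x)^2)/(Y*Z)^2) by (unfold C, Rsqr; field; nra).
    rewrite HS', W. unfold Qf. f_equal. ring. }
  assert (HC: -1 <= C <= 1).
  { assert (0 <= 1 - C²). { rewrite HS. unfold Rdiv; apply Rmult_le_pos; [lra| apply Rlt_le, Rinv_0_lt_compat; nra]. }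
    unfold Rsqr in *. split; nra. }
  rewrite cos_acos, sin_acos by exact HC. rewrite HS.
  assert (Esq: sqrt (Qf x y z / (Y*Z)^2) = sqrt (Qf x y z) / (Y*Z)).
  { rewrite sqrt_div_alt by nra. f_equal. rewrite <- Rsqr_pow2. apply sqrt_Rsqr. nra. }
  rewrite Esq. unfold C. assert (0 < sqrt (Qf x y z)) by (apply sqrt_lt_R0; lra).
  field. split; nra.
Qed.

Definition cwf (x y z : R) := (y+z-x)/(2*sqrt (Qf x y z)).
Definition valid (u : nat -> R) (f : face) : Prop :=
  let '(a,b,c) := f in 0 < u a /\ 0 < u b /\ 0 < u c /\ 0 < Qf (u a) (u b) (u c).
Definition fw_alg (u : nat -> R) (f : face) (i : nat) : R :=
  let '(a,b,c) := f in
  (if Nat.eqb a i then cwf (u a) (u b) (u c) else 0) +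
  (if Nat.eqb b i then cwf (u b) (u a) (u c) else 0) +
  (if Nat.eqb c i then cwf (u c) (u a) (u b) else 0).
Definition Dface (u du : nat -> R) (f : face) : R :=
  let '(a,b,c) := f in
  cwf (u a) (u b) (u c) * du a + cwf (u b) (u a) (u c) * du b + cwf (u c) (u a) (u b) * du c.
Definition Gf (u : nat -> R) (f : face) : R :=
  let '(a,b,c) := f in sqrt (Qf (u a) (u b) (u c)) / 2.
Definition fcoords (m : nat) (F : list face) : Prop :=
  forall a b c, In (a,b,c) F -> (a < m)%nat /\ (b < m)%nat /\ (c < m)%nat.

Lemma face_weight_alg u f i : valid u f -> face_weight u f i = fw_alg u f i.
Proof.
  destruct f as [[a b] c]. intros (ha & hb & hc & hq). unfold face_weight, fw_alg, edge_len.
  rewrite (cot_formula (u a)), (cot_formula (u b)), (cot_formula (u c)); auto;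
    [rewrite Qf_sym2 | rewrite Qf_sym1]; auto.
Qed.

Lemma cot_weight_alg F u i : (forall f, In f F -> valid u f) ->
  cot_weight F u i = LF F (fun f => fw_alg u f i).
Proof.
  intros H. unfold cot_weight. apply (LF_ext F (fun f => face_weight u f i)).
  intros; apply face_weight_alg; auto.
Qed.

Lemma sum_fw m u du a b c : (a < m)%nat -> (b < m)%nat -> (c < m)%nat ->
  sumR m (fun i => fw_alg u (a,b,c) i * du i) = Dface u du (a,b,c).
Proof.
  intros ha hb hc. unfold fw_alg, Dface.
  rewrite (sumR_ext _ _ (fun i => (if Nat.eqb a i then cwf (u a) (u b) (u c) * du i else 0)
     + (if Nat.eqb b i then cwf (u b) (u a) (u c) * du i else 0)
     + (if Nat.eqb c i then cwf (u c) (u a) (u b) * du i else 0))).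
  - rewrite !sumR_plus, !sumR_ind by auto. reflexivity.
  - intros i _. destruct (Nat.eqb a i), (Nat.eqb b i), (Nat.eqb c i); ring.
Qed.

Lemma Euler u a b c : valid u (a,b,c) -> Dface u u (a,b,c) = Gf u (a,b,c).
Proof.
  intros (ha & hb & hc & hq). unfold Dface, Gf, cwf. rewrite (Qf_sym1 (u a) (u b) (u c)), (Qf_sym2 (u a) (u b) (u c)).
  assert (hs: 0 < sqrt (Qf (u a) (u b) (u c))) by (apply sqrt_lt_R0; auto).
  assert (E: sqrt (Qf (u a) (u b) (u c)) * sqrt (Qf (u a) (u b) (u c)) = Qf (u a) (u b) (u c)) by (apply sqrt_sqrt; lra).
  apply Rmult_eq_reg_r with (2 * sqrt (Qf (u a) (u b) (u c))); [|lra].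
  set (r := sqrt (Qf (u a) (u b) (u c))) in *.
  replace ((u b + u c - u a) / (2 * r) * u a + (u a + u c - u b) / (2 * r) * u b +
    (u a + u b - u c) / (2 * r) * u c) with (Qf (u a) (u b) (u c) / (2*r)) by (unfold Qf; field; lra).
  rewrite <- E. field. lra.
Qed.

Section Pot.
Variables (m : nat) (F : list face) (wbar : nat -> R).

Definition Phi (u : nat -> R) : R := sumR m (fun i => wbar i * u i) - LF F (Gf u).
Definition hc (u du : nat -> R) : R := sumR m (fun i => wbar i * du i) - LF F (Dface u du).

Lemma integrand_eq u du : fcoords m F -> (forall f, In f F -> valid u f) ->
  sumR m (fun i => (wbar i - cot_weight F u i) * du i) = hc u du.
Proof.
  intros HF Hv. unfold hc.
  rewrite (sumR_ext _ _ (fun i => wbar i * du i - LF F (fun f => fw_alg u f i * du i))).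
  - rewrite sumR_minus, sumR_LF. f_equal. apply LF_ext. intros [[a b] c] Hin.
    destruct (HF a b c Hin) as (?&?&?). apply sum_fw; auto.
  - intros i _. rewrite cot_weight_alg by auto. rewrite Rmult_minus_distr_r. f_equal.
    clear Hv HF. induction F as [|f G IH]; [unfold LF; simpl; ring|].
    rewrite !LF_cons, <- IH. ring.
Qed.

Lemma Phi_ext u v : fcoords m F -> (forall i, (i < m)%nat -> u i = v i) -> Phi u = Phi v.
Proof.
  intros HF H. unfold Phi. f_equal.
  - apply sumR_ext. intros i hi. rewrite H; auto.
  - apply LF_ext. intros [[a b] c] Hin. destruct (HF a b c Hin) as (?&?&?).
    unfold Gf. rewrite !H; auto.
Qed.
End Pot.

Lemma dl_eq f x l l' : derivable_pt_lim f x l -> l = l' -> derivable_pt_lim f x l'.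
Proof. intros H <-; exact H. Qed.
Lemma dl_plus f g x l1 l2 : derivable_pt_lim f x l1 -> derivable_pt_lim g x l2 ->
  derivable_pt_lim (fun r => f r + g r) x (l1 + l2).
Proof. intros; apply (derivable_pt_lim_plus f g x l1 l2); auto. Qed.
Lemma dl_minus f g x l1 l2 : derivable_pt_lim f x l1 -> derivable_pt_lim g x l2 ->
  derivable_pt_lim (fun r => f r - g r) x (l1 - l2).
Proof. intros; apply (derivable_pt_lim_minus f g x l1 l2); auto. Qed.
Lemma dl_mult f g x l1 l2 : derivable_pt_lim f x l1 -> derivable_pt_lim g x l2 ->
  derivable_pt_lim (fun r => f r * g r) x (l1 * g x + f x * l2).
Proof. intros; apply (derivable_pt_lim_mult f g x l1 l2); auto. Qed.
Lemma dl_const c x : derivable_pt_lim (fun _ => c) x 0.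
Proof. apply (derivable_pt_lim_const c x). Qed.
Lemma dl_sqrt g x l : derivable_pt_lim g x l -> 0 < g x ->
  derivable_pt_lim (fun r => sqrt (g r)) x (l / (2 * sqrt (g x))).
Proof.
  intros H hp. eapply dl_eq.
  - apply (derivable_pt_lim_comp g sqrt x l); [exact H|]. apply derivable_pt_lim_sqrt; exact hp.
  - unfold Rdiv. ring.
Qed.

Lemma dl_ext f g x l : (forall r, f r = g r) -> derivable_pt_lim f x l -> derivable_pt_lim g x l.
Proof.
  intros Hfg H eps Heps. destruct (H eps Heps) as [d Hd]. exists d. intros h h0 hd.
  rewrite <- !Hfg. apply Hd; auto.
Qed.

Lemma dl_sumR (m : nat) (g : nat -> R -> R) (d : nat -> R) x :
  (forall i, (i < m)%nat -> derivable_pt_lim (g i) x (d i)) ->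
  derivable_pt_lim (fun r => sumR m (fun i => g i r)) x (sumR m d).
Proof.
  induction m; intros H.
  - unfold sumR; simpl. apply dl_const.
  - rewrite sumR_S. apply dl_ext with (fun r => sumR m (fun i => g i r) + g m r).
    + intros r. rewrite sumR_S. reflexivity.
    + apply dl_plus; auto.
Qed.

Lemma dl_LF (F : list face) (g : face -> R -> R) (d : face -> R) x :
  (forall f, In f F -> derivable_pt_lim (g f) x (d f)) ->
  derivable_pt_lim (fun r => LF F (fun f => g f r)) x (LF F d).
Proof.
  induction F; intros H.
  - unfold LF; simpl. apply dl_const.
  - rewrite LF_cons. apply dl_ext with (fun r => g a r + LF F (fun f => g f r)).
    + intros r. reflexivity.
    + apply dl_plus; simpl in H; auto.
Qed.

Lemma dl_Gf (p dp : R -> nat -> R) s a b c :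
  valid (p s) (a,b,c) ->
  derivable_pt_lim (fun r => p r a) s (dp s a) ->
  derivable_pt_lim (fun r => p r b) s (dp s b) ->
  derivable_pt_lim (fun r => p r c) s (dp s c) ->
  derivable_pt_lim (fun r => Gf (p r) (a,b,c)) s (Dface (p s) (dp s) (a,b,c)).
Proof.
  intros (ha & hb & hc & hq) Da Db Dc. unfold Gf, Dface, cwf.
  rewrite (Qf_sym1 (p s a) (p s b) (p s c)), (Qf_sym2 (p s a) (p s b) (p s c)).
  assert (hs: 0 < sqrt (Qf (p s a) (p s b) (p s c))) by (apply sqrt_lt_R0; auto).
  eapply dl_eq.
  - apply dl_ext with (fun r => sqrt (Qf (p r a) (p r b) (p r c)) * /2); [intros; unfold Rdiv; reflexivity|].
    eapply dl_mult; [|apply dl_const]. apply dl_sqrt; [|exact hq].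
    unfold Qf. repeat first [apply dl_minus | apply dl_plus | apply dl_mult | apply dl_const | eassumption].
  - cbv beta. field. lra.
Qed.

Lemma dl_Phi m F wbar (p dp : R -> nat -> R) s : fcoords m F ->
  (forall f, In f F -> valid (p s) f) ->
  (forall i, (i < m)%nat -> derivable_pt_lim (fun r => p r i) s (dp s i)) ->
  derivable_pt_lim (fun r => Phi m F wbar (p r)) s (hc m F wbar (p s) (dp s)).
Proof.
  intros HF Hv Hd. unfold Phi, hc. apply dl_minus.
  - apply (dl_sumR m (fun i r => wbar i * p r i) (fun i => wbar i * dp s i)).
    intros i hi. eapply dl_eq; [apply dl_mult; [apply dl_const | apply Hd; auto]|]. cbv beta. ring.
  - apply (dl_LF F (fun f r => Gf (p r) f)). intros [[a b] c] Hin.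
    destruct (HF a b c Hin) as (?&?&?). apply dl_Gf; auto.
Qed.

Lemma cp_ext f g x : (forall r, f r = g r) -> continuity_pt f x -> continuity_pt g x.
Proof.
  intros Hfg H eps Heps. destruct (H eps Heps) as [d [Hd1 Hd2]]. exists d. split; auto.
  intros y Hy. unfold dist in *; simpl in *. rewrite <- !Hfg. apply Hd2; auto.
Qed.
Lemma cp_plus f g x : continuity_pt f x -> continuity_pt g x -> continuity_pt (fun r => f r + g r) x.
Proof. intros; apply (continuity_pt_plus f g x); auto. Qed.
Lemma cp_minus f g x : continuity_pt f x -> continuity_pt g x -> continuity_pt (fun r => f r - g r) x.
Proof. intros; apply (continuity_pt_minus f g x); auto. Qed.
Lemma cp_mult f g x : continuity_pt f x -> continuity_pt g x -> continuity_pt (fun r => f r * g r) x.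
Proof. intros; apply (continuity_pt_mult f g x); auto. Qed.
Lemma cp_const c x : continuity_pt (fun _ => c) x.
Proof. apply continuity_pt_const. intros a b; reflexivity. Qed.
Lemma cp_div f g x : continuity_pt f x -> continuity_pt g x -> g x <> 0 -> continuity_pt (fun r => f r / g r) x.
Proof. intros; apply (continuity_pt_div f g x); auto. Qed.
Lemma cp_sqrt g x : continuity_pt g x -> 0 <= g x -> continuity_pt (fun r => sqrt (g r)) x.
Proof. intros; apply (continuity_pt_comp g sqrt x); auto. apply continuity_pt_sqrt; auto. Qed.

Lemma cp_sumR (m : nat) (g : nat -> R -> R) x :
  (forall i, (i < m)%nat -> continuity_pt (g i) x) ->
  continuity_pt (fun r => sumR m (fun i => g i r)) x.
Proof.
  induction m; intros H.
  - unfold sumR; simpl. apply cp_const.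
  - apply cp_ext with (fun r => sumR m (fun i => g i r) + g m r).
    + intros r. rewrite sumR_S. reflexivity.
    + apply cp_plus; auto.
Qed.

Lemma cp_LF (F : list face) (g : face -> R -> R) x :
  (forall f, In f F -> continuity_pt (g f) x) ->
  continuity_pt (fun r => LF F (fun f => g f r)) x.
Proof.
  induction F; intros H.
  - unfold LF; simpl. apply cp_const.
  - apply cp_ext with (fun r => g a r + LF F (fun f => g f r)).
    + intros r. reflexivity.
    + apply cp_plus; simpl in H; auto.
Qed.

Lemma cp_cwf (q : R -> nat -> R) x a b c :
  continuity_pt (fun r => q r a) x -> continuity_pt (fun r => q r b) x ->
  continuity_pt (fun r => q r c) x -> 0 < Qf (q x a) (q x b) (q x c) ->
  continuity_pt (fun r => cwf (q r a) (q r b) (q r c)) x.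
Proof.
  intros Ca Cb Cc hq. unfold cwf. apply cp_div.
  - repeat first [apply cp_minus | apply cp_plus | assumption].
  - apply cp_mult; [apply cp_const|]. apply cp_sqrt; [|lra].
    unfold Qf. repeat first [apply cp_minus | apply cp_plus | apply cp_mult | apply cp_const | assumption].
  - assert (0 < sqrt (Qf (q x a) (q x b) (q x c))) by (apply sqrt_lt_R0; auto). lra.
Qed.

Lemma cp_hc m F wbar (q dq : R -> nat -> R) x : fcoords m F ->
  (forall f, In f F -> valid (q x) f) ->
  (forall i, (i < m)%nat -> continuity_pt (fun r => q r i) x) ->
  (forall i, (i < m)%nat -> continuity_pt (fun r => dq r i) x) ->
  continuity_pt (fun r => hc m F wbar (q r) (dq r)) x.
Proof.
  intros HF Hv Cq Cdq. unfold hc. apply cp_minus.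
  - apply (cp_sumR m (fun i r => wbar i * dq r i)). intros i hi. apply cp_mult; [apply cp_const|auto].
  - apply (cp_LF F (fun f r => Dface (q r) (dq r) f)). intros [[a b] c] Hin.
    destruct (HF a b c Hin) as (?&?&?). destruct (Hv _ Hin) as (h1&h2&h3&h4). unfold Dface.
    assert (h5: 0 < Qf (q x b) (q x a) (q x c)) by (rewrite Qf_sym1; auto).
    assert (h6: 0 < Qf (q x c) (q x a) (q x b)) by (rewrite Qf_sym2; auto).
    repeat apply cp_plus; apply cp_mult; auto; apply cp_cwf; auto.
Qed.

Definition cl (a b x : R) : R := Rmax a (Rmin b x).
Lemma cl_lip a b x y : a <= b -> Rabs (cl a b x - cl a b y) <= Rabs (x - y).
Proof.
  intros. unfold cl, Rmax, Rmin.
  repeat destruct Rle_dec; unfold Rabs; repeat destruct Rcase_abs; lra.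
Qed.
Lemma cl_cont a b x : a <= b -> continuity_pt (cl a b) x.
Proof.
  intros hab eps Heps. exists eps. split; auto. intros y [_ Hy]. unfold dist in *; simpl in *.
  unfold R_dist in *. eapply Rle_lt_trans; [apply cl_lip; auto | exact Hy].
Qed.
Lemma cl_in a b x : a <= b -> a <= cl a b x <= b.
Proof. intros. unfold cl, Rmax, Rmin. repeat destruct Rle_dec; lra. Qed.
Lemma cl_id a b x : a <= x <= b -> cl a b x = x.
Proof. intros. unfold cl, Rmax, Rmin. repeat destruct Rle_dec; lra. Qed.

Lemma ftc (H h g : R -> R) a b : a < b ->
  (forall x, a <= x <= b -> continuity_pt H x) ->
  (forall x, a < x < b -> derivable_pt_lim H x (h x)) ->
  (forall x, a <= x <= b -> continuity_pt g x) ->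
  (forall x, a <= x <= b -> h x = g x) ->
  integral_is h a b (H b - H a).
Proof.
  intros hab CH DH Cg Ehg.
  assert (hle : a <= b) by lra.
  pose (prg := continuity_implies_RiemannInt hle Cg).
  assert (prh : Riemann_integrable h a b).
  { apply (@Riemann_integrable_ext g h a b); [|exact prg].
    intros x Hx. rewrite Rmin_left, Rmax_right in Hx by lra. symmetry; auto. }
  exists prh.
  rewrite (RiemannInt_P18 prh prg hle) by (intros; apply Ehg; lra).
  set (P := primitive hle (FTC_P1 hle Cg)).
  assert (DP : forall x, a <= x <= b -> derivable_pt_lim P x (g x)) by (intros; apply RiemannInt_P28; auto).
  assert (Pa : P a = 0).
  { unfold P, primitive. destruct (Rle_dec a a); [|lra]. destruct (Rle_dec a b); [|lra].
    apply RiemannInt_P9. }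
  assert (Pb : P b = RiemannInt prg).
  { unfold P, primitive. destruct (Rle_dec a b); [|lra]. destruct (Rle_dec b b); [|lra].
    apply RiemannInt_P5. }
  set (D := fun x => H x - P x).
  assert (prD : forall x, a < x < b -> derivable_pt D x).
  { intros x Hx. exists (h x - g x). apply dl_minus; [apply DH; auto | apply DP; lra]. }
  assert (CD : forall x, a <= x <= b -> continuity_pt D x).
  { intros x Hx. apply cp_minus; auto. apply derivable_continuous_pt. exists (g x). apply DP; auto. }
  assert (ZD : forall x (Px : a < x < b), derive_pt D x (prD x Px) = 0).
  { intros x Px. apply derive_pt_eq_0. eapply dl_eq.
    - apply dl_minus; [apply DH; auto | apply DP; lra].
    - rewrite Ehg by lra. ring. }
  assert (K := null_derivative_loc D a b prD CD ZD).
  unfold constant_D_eq in K. assert (Kb := K b ltac:(lra)). unfold D in Kb.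
  rewrite Pa, Pb in Kb. lra.
Qed.

Lemma piece m F wbar (p dp : R -> nat -> R) a b : fcoords m F -> a < b ->
  (forall i, (i < m)%nat -> (forall s, derivable_pt_lim (fun r => p r i) s (dp s i)) /\ continuity (fun r => dp r i)) ->
  (forall s, a <= s <= b -> forall f, In f F -> valid (p s) f) ->
  integral_is (fun s => sumR m (fun i => (wbar i - cot_weight F (p s) i) * dp s i)) a b
              (Phi m F wbar (p b) - Phi m F wbar (p a)).
Proof.
  intros HF hab Hd Hv.
  apply (ftc (fun s => Phi m F wbar (p s)) _ (fun s => hc m F wbar (p (cl a b s)) (dp (cl a b s)))); auto.
  - intros x Hx. apply derivable_continuous_pt. exists (hc m F wbar (p x) (dp x)).
    apply dl_Phi; [auto | apply Hv; lra | intros i hi; apply (Hd i hi)].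
  - intros x Hx. eapply dl_eq; [apply dl_Phi; [auto | apply Hv; lra | intros i hi; apply (Hd i hi)]|].
    symmetry. apply integrand_eq; auto. apply Hv; lra.
  - intros x Hx.
    apply (continuity_pt_comp (cl a b) (fun r => hc m F wbar (p r) (dp r)) x).
    + apply cl_cont; lra.
    + assert (Hc := cl_in a b x ltac:(lra)). apply cp_hc; auto.
      * intros i hi. apply derivable_continuous_pt. exists (dp (cl a b x) i). apply (Hd i hi).
      * intros i hi. apply (Hd i hi).
  - intros x Hx. rewrite cl_id by auto. apply integrand_eq; auto.
Qed.

Lemma integral_uniq f a b I J : integral_is f a b I -> integral_is f a b J -> I = J.
Proof. intros [pr1 <-] [pr2 <-]. apply RiemannInt_P5. Qed.

Lemma Omega_valid m F u : fcoords m F -> in_Omega m F u -> forall f, In f F -> valid u f.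
Proof.
  intros HF [Hpos [_ Htri]] [[a b] c] Hin. destruct (HF a b c Hin) as (ha&hb&hc).
  assert (pa := Hpos a ha). assert (pb := Hpos b hb). assert (pc := Hpos c hc).
  destruct (Htri a b c Hin) as (t1&t2&t3).
  repeat split; auto.
  rewrite <- (sqrt_sqrt (u a)), <- (sqrt_sqrt (u b)), <- (sqrt_sqrt (u c)) by lra.
  rewrite heron.
  assert (0 < sqrt (u a)) by (apply sqrt_lt_R0; auto).
  assert (0 < sqrt (u b)) by (apply sqrt_lt_R0; auto).
  assert (0 < sqrt (u c)) by (apply sqrt_lt_R0; auto).
  repeat apply Rmult_lt_0_compat; lra.
Qed.

Lemma valid_ext m F u v f : fcoords m F -> In f F -> (forall i, (i < m)%nat -> u i = v i) ->
  valid u f -> valid v f.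
Proof.
  destruct f as [[a b] c]. intros HF Hin H. destruct (HF a b c Hin) as (?&?&?).
  unfold valid. rewrite !H; auto.
Qed.

Lemma t_mono (t : nat -> R) k : (forall j, (j < k)%nat -> t j < t (S j)) ->
  forall j d, (j + d <= k)%nat -> t j <= t (j + d)%nat.
Proof.
  intros Ht j d. induction d; intros H.
  - rewrite Nat.add_0_r; lra.
  - rewrite Nat.add_succ_r. specialize (Ht (j + d)%nat ltac:(lia)). specialize (IHd ltac:(lia)). lra.
Qed.

Lemma path_value m F wbar x y I : fcoords m F ->
  pw_path_integral m (in_Omega m F) (fun mu i => wbar i - cot_weight F mu i) x y I ->
  I = Phi m F wbar y - Phi m F wbar x.
Proof.
  intros HF (gamma & k & t & p & dp & Ij & hk & t0 & tk & tinc & Hend & Hom & Hpc & HI).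
  assert (Tb : forall j, (j <= k)%nat -> 0 <= t j <= 1).
  { intros j hj. split.
    - rewrite <- t0. apply (t_mono t k tinc 0 j). lia.
    - assert (E := t_mono t k tinc j (k - j) ltac:(lia)).
      replace (j + (k - j))%nat with k in E by lia. lra. }
  assert (HIj : forall j, (j < k)%nat ->
     Ij j = Phi m F wbar (gamma (t (S j))) - Phi m F wbar (gamma (t j))).
  { intros j hj. destruct (Hpc j hj) as (Hd & Hg & Hint).
    assert (Tj := Tb j ltac:(lia)). assert (Tj' := Tb (S j) hj). assert (tl := tinc j hj).
    assert (V : forall s, t j <= s <= t (S j) -> forall f, In f F -> valid (p j s) f).
    { intros s hs f Hin. apply (valid_ext m F (gamma s) (p j s) f HF Hin).
      - intros i hi. apply Hg; auto.
      - apply (Omega_valid m F); auto. apply Hom. lra. }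
    assert (P := piece m F wbar (p j) (dp j) (t j) (t (S j)) HF tl Hd V).
    rewrite (integral_uniq _ _ _ _ _ Hint P).
    f_equal; apply (Phi_ext m F wbar); auto; intros i hi; symmetry; apply Hg; auto; lra. }
  assert (Tel : forall n, (n <= k)%nat ->
     sumR n Ij = Phi m F wbar (gamma (t n)) - Phi m F wbar (gamma (t 0%nat))).
  { induction n; intros hn.
    - rewrite sumR_0. ring.
    - rewrite sumR_S, IHn by lia. rewrite HIj by lia. ring. }
  rewrite HI. change (fold_right Rplus 0 (map Ij (seq 0 k))) with (sumR k Ij).
  rewrite Tel by lia. rewrite tk, t0.
  f_equal; apply (Phi_ext m F wbar); auto; intros i hi; apply Hend; auto.
Qed.

Lemma convex_tri x0 y0 z0 x1 y1 z1 l : 0 < x0 -> 0 < y0 -> 0 < z0 -> 0 < x1 -> 0 < y1 -> 0 < z1 ->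
  0 <= l <= 1 -> sqrt x0 < sqrt y0 + sqrt z0 -> sqrt x1 < sqrt y1 + sqrt z1 ->
  sqrt ((1-l)*x0 + l*x1) < sqrt ((1-l)*y0 + l*y1) + sqrt ((1-l)*z0 + l*z1).
Proof.
  intros hx0 hy0 hz0 hx1 hy1 hz1 hl t0 t1.
  assert (ex0 := sqrt_sqrt x0 ltac:(lra)). assert (ey0 := sqrt_sqrt y0 ltac:(lra)).
  assert (ez0 := sqrt_sqrt z0 ltac:(lra)). assert (ex1 := sqrt_sqrt x1 ltac:(lra)).
  assert (ey1 := sqrt_sqrt y1 ltac:(lra)). assert (ez1 := sqrt_sqrt z1 ltac:(lra)).
  assert (pa0 : 0 < sqrt x0) by (apply sqrt_lt_R0; auto).
  assert (pb0 : 0 < sqrt y0) by (apply sqrt_lt_R0; auto).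
  assert (pc0 : 0 < sqrt z0) by (apply sqrt_lt_R0; auto).
  assert (pa1 : 0 < sqrt x1) by (apply sqrt_lt_R0; auto).
  assert (pb1 : 0 < sqrt y1) by (apply sqrt_lt_R0; auto).
  assert (pc1 : 0 < sqrt z1) by (apply sqrt_lt_R0; auto).
  set (a0 := sqrt x0) in *. set (b0 := sqrt y0) in *. set (c0 := sqrt z0) in *.
  set (a1 := sqrt x1) in *. set (b1 := sqrt y1) in *. set (c1 := sqrt z1) in *.
  clearbody a0 b0 c0 a1 b1 c1.
  set (X := (1-l)*x0 + l*x1). set (Y := (1-l)*y0 + l*y1). set (Z := (1-l)*z0 + l*z1).
  assert (hY : 0 <= Y) by (unfold Y; nra). assert (hZ : 0 <= Z) by (unfold Z; nra).
  assert (hX : 0 <= X) by (unfold X; nra).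
  assert (eA := sqrt_sqrt X hX). assert (eB := sqrt_sqrt Y hY). assert (eC := sqrt_sqrt Z hZ).
  assert (sA := sqrt_pos X). assert (sB := sqrt_pos Y). assert (sC := sqrt_pos Z).
  set (K := (1-l)*(b0*c0) + l*(b1*c1)).
  assert (hK : 0 <= K) by (unfold K; apply Rplus_le_le_0_compat; apply Rmult_le_pos; nra).
  assert (EK : Y*Z - K*K = l*(1-l)*(b0*c1 - b1*c0)^2) by (unfold Y, Z, K; rewrite <- ey0, <- ez0, <- ey1, <- ez1; ring).
  assert (hYZ : K*K <= Y*Z) by (assert (0 <= l*(1-l)*(b0*c1 - b1*c0)^2) by (apply Rmult_le_pos; [nra| apply pow2_ge_0]); lra).
  assert (hBC : K <= sqrt Y * sqrt Z).
  { assert (0 <= sqrt Y * sqrt Z) by nra.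
    assert ((sqrt Y * sqrt Z) * (sqrt Y * sqrt Z) = Y * Z) by (transitivity ((sqrt Y*sqrt Y)*(sqrt Z*sqrt Z)); [ring| rewrite eB, eC; reflexivity]).
    nra. }
  assert (hx0' : x0 < (b0+c0)*(b0+c0)) by (rewrite <- ex0; nra).
  assert (hx1' : x1 < (b1+c1)*(b1+c1)) by (rewrite <- ex1; nra).
  assert (hXl : X < Y + Z + 2*K).
  { assert (0 < (1-l)*((b0+c0)*(b0+c0) - x0) + l*((b1+c1)*(b1+c1) - x1)).
    { destruct (Rle_lt_dec 1 l).
      - assert (l = 1) by lra. subst l. lra.
      - assert (0 < (1-l)*((b0+c0)*(b0+c0) - x0)) by (apply Rmult_lt_0_compat; lra).
        assert (0 <= l*((b1+c1)*(b1+c1) - x1)) by (apply Rmult_le_pos; lra). lra. }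
    unfold X, Y, Z, K. rewrite <- ey0, <- ez0, <- ey1, <- ez1. lra. }
  assert (sqrt X * sqrt X < (sqrt Y + sqrt Z)*(sqrt Y + sqrt Z)) by nra.
  nra.
Qed.

Lemma sumR_const m : sumR m (fun _ => 1) = INR m.
Proof. induction m; [reflexivity|]. rewrite sumR_S, IHm, S_INR. ring. Qed.

Definition line (u : nat -> R) (s : R) : nat -> R := fun i => 1 + s * (u i - 1).

Lemma line_Omega m F u s : fcoords m F -> in_Omega m F u -> 0 <= s <= 1 -> in_Omega m F (line u s).
Proof.
  intros HF [Hpos [Hsum Htri]] hs. unfold line. split; [|split].
  - intros k hk. specialize (Hpos k hk). nra.
  - rewrite (sumR_ext _ _ (fun i => 1 + s * u i - s * 1)) by (intros; ring).
    rewrite sumR_minus, sumR_plus, sumR_const, sumR_scal, sumR_scal, sumR_const, Hsum. ring.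
  - intros a b c Hin. destruct (Htri a b c Hin) as (t1&t2&t3).
    destruct (HF a b c Hin) as (ha&hb&hc).
    assert (pa := Hpos a ha). assert (pb := Hpos b hb). assert (pc := Hpos c hc).
    rewrite !(fun k => Rplus_comm 1 (s * (u k - 1))).
    replace (s * (u a - 1) + 1) with ((1-s)*1 + s * u a) by ring.
    replace (s * (u b - 1) + 1) with ((1-s)*1 + s * u b) by ring.
    replace (s * (u c - 1) + 1) with ((1-s)*1 + s * u c) by ring.
    assert (h1 : sqrt 1 < sqrt 1 + sqrt 1) by (rewrite sqrt_1; lra).
    repeat split; apply convex_tri; auto; lra.
Qed.

Lemma exists_path m F wbar u : fcoords m F -> in_Omega m F u ->
  pw_path_integral m (in_Omega m F) (fun mu i => wbar i - cot_weight F mu i) ones u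
    (Phi m F wbar u - Phi m F wbar ones).
Proof.
  intros HF Hu.
  exists (line u), 1%nat, INR, (fun _ => line u), (fun _ _ i => u i - 1),
    (fun _ => Phi m F wbar u - Phi m F wbar ones).
  assert (Hd : forall i, (i < m)%nat -> (forall s, derivable_pt_lim (fun r => line u r i) s (u i - 1))
      /\ continuity (fun r : R => u i - 1)).
  { intros i hi. split.
    - intros s. unfold line. eapply dl_eq.
      + apply dl_plus; [apply dl_const|]. apply dl_mult; [apply derivable_pt_lim_id | apply dl_const].
      + cbv beta. unfold id. ring.
    - intros x. apply cp_const. }
  split; [lia|]. split; [reflexivity|]. split; [reflexivity|].
  split. { intros j hj. replace j with 0%nat by lia. simpl. lra. }
  split. { intros i hi. unfold line, ones. split; ring. }
  split. { intros s hs. apply line_Omega; auto. }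
  split.
  - intros j hj. replace j with 0%nat by lia. split; [exact Hd|]. split; [intros; reflexivity|].
    simpl INR. 
    assert (P := piece m F wbar (line u) (fun _ i => u i - 1) 0 1 HF ltac:(lra) Hd).
    replace (Phi m F wbar u - Phi m F wbar ones) with
      (Phi m F wbar (line u 1) - Phi m F wbar (line u 0)).
    + apply P. intros s hs f Hin. apply (Omega_valid m F); auto. apply line_Omega; auto.
    + f_equal; apply (Phi_ext m F wbar); auto; intros i hi; unfold line, ones; ring.
  - simpl. ring.
Qed.

Lemma rcs v1 v2 v3 x1 x2 x3 : 0<v1 -> 0<v2 -> 0<v3 -> 0<x1 -> 0<x2 -> 0<x3 ->
  0 < Qf v1 v2 v3 -> 0 < Qf x1 x2 x3 ->
  sqrt (Qf v1 v2 v3) * sqrt (Qf x1 x2 x3) <= Bf v1 v2 v3 x1 x2 x3 /\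
  (sqrt (Qf v1 v2 v3) * sqrt (Qf x1 x2 x3) = Bf v1 v2 v3 x1 x2 x3 ->
   (v1+v2+v3)*x1 = (x1+x2+x3)*v1 /\ (v1+v2+v3)*x2 = (x1+x2+x3)*v2 /\ (v1+v2+v3)*x3 = (x1+x2+x3)*v3).
Proof.
  intros. assert (HB := Bpos v1 v2 v3 x1 x2 x3 H H0 H1 H2 H3 H4 H5 H6).
  assert (Hid := ident v1 v2 v3 x1 x2 x3). cbv zeta in Hid.
  assert (hSv : 0 < v1+v2+v3) by lra.
  assert (sq := sqrt_sqrt (Qf v1 v2 v3) ltac:(lra)).
  assert (sq' := sqrt_sqrt (Qf x1 x2 x3) ltac:(lra)).
  assert (p1 := sqrt_pos (Qf v1 v2 v3)). assert (p2 := sqrt_pos (Qf x1 x2 x3)).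
  assert (hab : sqrt (Qf v1 v2 v3) * sqrt (Qf x1 x2 x3) * (sqrt (Qf v1 v2 v3) * sqrt (Qf x1 x2 x3)) = Qf v1 v2 v3 * Qf x1 x2 x3).
  { transitivity ((sqrt (Qf v1 v2 v3) * sqrt (Qf v1 v2 v3)) * (sqrt (Qf x1 x2 x3) * sqrt (Qf x1 x2 x3))); [ring|]. rewrite sq, sq'. reflexivity. }
  clear sq sq'.
  set (a := sqrt (Qf v1 v2 v3)) in *. set (b := sqrt (Qf x1 x2 x3)) in *. clearbody a b.
  revert Hid HB hab p1 p2 H5 H6 hSv.
  generalize (Qf v1 v2 v3) (Qf x1 x2 x3)
    (Bf v1 v2 v3 x1 x2 x3) (v1+v2+v3) (x1+x2+x3).
  intros Qv Qx B Sv Sx Hid HB hab p1 p2 hQv hQx hSv.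
  remember (Sv*x1 - Sx*v1) as e1. remember (Sv*x2 - Sx*v2) as e2.
  remember (Sv*x3 - Sx*v3) as e3. remember (v1*e1 + v2*e2 + v3*e3) as w.
  assert (n1 := pow2_ge_0 e1). assert (n2 := pow2_ge_0 e2). assert (n3 := pow2_ge_0 e3).
  assert (n4 := pow2_ge_0 w).
  assert (hB2 : Qv*Qx <= B^2).
  { destruct (Rle_lt_dec (Qv*Qx) (B^2)) as [h|h]; auto.
    assert (0 < Sv*Sv*(Qv*Qx - B^2)) by (apply Rmult_lt_0_compat; nra).
    assert (0 <= 2*Qv*(e1^2+e2^2+e3^2)) by (apply Rmult_le_pos; lra). nra. }
  assert (0 <= a*b) by (apply Rmult_le_pos; auto).
  split.
  - nra.
  - intros E. rewrite E in hab.
    assert (Z : 2*Qv*(e1^2+e2^2+e3^2) + 4*w^2 = 0) by (rewrite <- Hid; nra).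
    assert (0 <= 2*Qv*(e1^2+e2^2+e3^2)) by (apply Rmult_le_pos; lra).
    assert (e1^2+e2^2+e3^2 = 0).
    { assert (HH : 2*Qv*(e1^2+e2^2+e3^2) = 0) by nra.
      apply Rmult_integral in HH. destruct HH; [lra|auto]. }
    assert (e1 = 0) by nra. assert (e2 = 0) by nra. assert (e3 = 0) by nra.
    lra.
Qed.

Lemma face_T ubar u a b c : valid ubar (a,b,c) -> valid u (a,b,c) ->
  0 <= Dface ubar u (a,b,c) - Gf u (a,b,c) /\
  (Dface ubar u (a,b,c) - Gf u (a,b,c) = 0 ->
   exists rf, forall e, In e (face_edges (a,b,c)) -> u e = rf * ubar e).
Proof.
  intros (h1&h2&h3&h4) (k1&k2&k3&k4).
  destruct (rcs (ubar a) (ubar b) (ubar c) (u a) (u b) (u c)) as [R1 R2]; auto.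
  assert (hs : 0 < sqrt (Qf (ubar a) (ubar b) (ubar c))) by (apply sqrt_lt_R0; auto).
  assert (E : Dface ubar u (a,b,c) - Gf u (a,b,c) =
    (Bf (ubar a) (ubar b) (ubar c) (u a) (u b) (u c) - sqrt (Qf (ubar a) (ubar b) (ubar c)) * sqrt (Qf (u a) (u b) (u c)))
      / (2 * sqrt (Qf (ubar a) (ubar b) (ubar c)))).
  { unfold Dface, Gf, cwf, Bf. rewrite (Qf_sym1 (ubar a)), (Qf_sym2 (ubar a)). field. lra. }
  rewrite E. split.
  - unfold Rdiv. apply Rmult_le_pos; [lra|]. apply Rlt_le, Rinv_0_lt_compat; lra.
  - intros Z. assert (Z' : Bf (ubar a) (ubar b) (ubar c) (u a) (u b) (u c) -
        sqrt (Qf (ubar a) (ubar b) (ubar c)) * sqrt (Qf (u a) (u b) (u c)) = 0).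
    { unfold Rdiv in Z. apply Rmult_integral in Z. destruct Z as [Z|Z]; [exact Z|].
      exfalso. assert (0 < / (2 * sqrt (Qf (ubar a) (ubar b) (ubar c)))) by (apply Rinv_0_lt_compat; lra). lra. }
    destruct (R2 ltac:(lra)) as (e1&e2&e3).
    exists ((u a + u b + u c) / (ubar a + ubar b + ubar c)).
    intros e He. simpl in He. destruct He as [<-|[<-|[<-|[]]]];
      apply Rmult_eq_reg_l with (ubar a + ubar b + ubar c); try lra; field_simplify; lra.
Qed.

Lemma LF_zero F : LF F (fun _ => 0) = 0.
Proof. induction F; [reflexivity|]. rewrite LF_cons, IHF; ring. Qed.

Lemma LF_nonneg_zero F h : (forall f, In f F -> 0 <= h f) -> LF F h <= 0 ->
  forall f, In f F -> h f = 0.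
Proof.
  induction F; intros Hn Hs f Hin; [destruct Hin|].
  rewrite LF_cons in Hs.
  assert (0 <= LF F h).
  { clear IHF Hs Hin. induction F; [unfold LF; simpl; lra|]. rewrite LF_cons.
    assert (0 <= h a0) by (apply Hn; simpl; auto).
    assert (0 <= LF F h) by (apply IHF; intros; apply Hn; simpl in *; tauto). lra. }
  assert (0 <= h a) by (apply Hn; simpl; auto).
  destruct Hin as [<-|Hin]; [lra|]. apply IHF; auto; [intros; apply Hn; simpl; auto | lra].
Qed.

Lemma inc_exists F i : edge_incidence F i <> 0%nat -> exists f, In f F /\ In i (face_edges f).
Proof.
  induction F as [|f G IH]; intros H; [exfalso; apply H; reflexivity|].
  unfold edge_incidence in H. simpl in H. fold (edge_incidence G i) in H.
  destruct (filter (fun e => Nat.eqb e i) (face_edges f)) eqn:Ef.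
  - simpl in H. destruct (IH H) as [g [Hg Hi]]. exists g; simpl; auto.
  - exists f. split; simpl; auto.
    assert (Hn0 : In n (filter (fun e => Nat.eqb e i) (face_edges f))) by (rewrite Ef; simpl; auto).
    apply filter_In in Hn0. destruct Hn0 as [Hn0 Heq]. apply Nat.eqb_eq in Heq. subst. exact Hn0.
Qed.

Definition fe1 (f : face) : nat := let '(a,_,_) := f in a.

Lemma connect_prop m F (u ubar : nat -> R) : fcoords m F ->
  (forall k, (k < m)%nat -> 0 < ubar k) ->
  (forall x y, (x < length F)%nat -> (y < length F)%nat ->
     Relation_Operators.clos_refl_trans nat (faces_adjacent F) x y) ->
  (forall f, In f F -> exists rf, forall e, In e (face_edges f) -> u e = rf * ubar e) ->
  F <> nil ->
  (forall i, (i < m)%nat -> exists f, In f F /\ In i (face_edges f)) ->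
  exists r, forall i, (i < m)%nat -> u i = r * ubar i.
Proof.
  intros HF Hpos Hconn Hprop Hne Hcov.
  set (d := (0,0,0)%nat : face).
  set (r := fun x => u (fe1 (nth x F d)) / ubar (fe1 (nth x F d))).
  assert (Hin_coord : forall f e, In f F -> In e (face_edges f) -> (e < m)%nat).
  { intros [[a b] c] e Hin He. destruct (HF a b c Hin) as (?&?&?). simpl in He.
    destruct He as [<-|[<-|[<-|[]]]]; auto. }
  assert (Hr : forall x e, (x < length F)%nat -> In e (face_edges (nth x F d)) -> u e = r x * ubar e).
  { intros x e hx He. assert (Hin : In (nth x F d) F) by (apply nth_In; auto).
    destruct (Hprop _ Hin) as [rf Hrf].
    assert (H1 : In (fe1 (nth x F d)) (face_edges (nth x F d))).
    { destruct (nth x F d) as [[a b] c]; simpl; auto. }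
    assert (p1 := Hpos _ (Hin_coord _ _ Hin H1)). assert (E1 := Hrf _ H1).
    unfold r. rewrite E1, (Hrf e He). field. lra. }
  assert (Hadj : forall x y, Relation_Operators.clos_refl_trans nat (faces_adjacent F) x y -> r x = r y).
  { intros x y Hc. induction Hc as [x y Hxy| x | x y z _ IH1 _ IH2].
    - destruct Hxy as (hx & hy & e & He1 & He2).
      assert (Hin : In (nth x F d) F) by (apply nth_In; auto).
      assert (pe := Hpos _ (Hin_coord _ _ Hin He1)).
      assert (E1 := Hr x e hx He1). assert (E2 := Hr y e hy He2).
      apply Rmult_eq_reg_r with (ubar e); lra.
    - reflexivity.
    - congruence. }
  assert (hF0 : (0 < length F)%nat) by (destruct F; [congruence | simpl; lia]).
  exists (r 0%nat). intros i hi. destruct (Hcov i hi) as [f [Hf Hi]].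
  destruct (In_nth F f d Hf) as [x [hx Ex]].
  rewrite (Hadj 0%nat x (Hconn 0%nat x hF0 hx)). apply Hr; auto. rewrite Ex; auto.
Qed.

Lemma strict_min m F wbar ubar u : triangulated_surface m F -> in_Omega m F ubar ->
  (forall i, (i < m)%nat -> cot_weight F ubar i = wbar i) -> in_Omega m F u ->
  (exists i, (i < m)%nat /\ u i <> ubar i) -> Phi m F wbar ubar < Phi m F wbar u.
Proof.
  intros (HFne & Hfaces & Hinc & Hconn) Hb Hw Hu Hne.
  assert (HF : fcoords m F) by (intros a b c Hin; destruct (Hfaces a b c Hin) as (?&?&?&_); auto).
  assert (Vb := Omega_valid m F ubar HF Hb). assert (Vu := Omega_valid m F u HF Hu).
  assert (HS1 : forall v, sumR m (fun i => wbar i * v i) = LF F (Dface ubar v)).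
  { intros v. assert (E := integrand_eq m F wbar ubar v HF Vb). unfold hc in E.
    rewrite (sumR_ext _ _ (fun _ => 0)) in E by (intros i hi; rewrite Hw; auto; ring).
    rewrite sumR_zero in E. lra. }
  assert (Rep : forall v, Phi m F wbar v = LF F (fun f => Dface ubar v f - Gf v f)).
  { intros v. unfold Phi. rewrite HS1, LF_minus. reflexivity. }
  assert (P0 : Phi m F wbar ubar = 0).
  { rewrite Rep. rewrite (LF_ext F _ (fun _ => 0)); [apply LF_zero|].
    intros [[a b] c] Hin. rewrite Euler by auto. ring. }
  rewrite P0, Rep.
  assert (Tn : forall f, In f F -> 0 <= Dface ubar u f - Gf u f).
  { intros [[a b] c] Hin. apply face_T; auto. }
  destruct (Rlt_or_le 0 (LF F (fun f => Dface ubar u f - Gf u f))) as [h|h]; [exact h|].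
  exfalso.
  assert (Z := LF_nonneg_zero F _ Tn h).
  assert (Hprop : forall f, In f F -> exists rf, forall e, In e (face_edges f) -> u e = rf * ubar e).
  { intros [[a b] c] Hin. apply face_T; auto. }
  assert (Hcov : forall i, (i < m)%nat -> exists f, In f F /\ In i (face_edges f)).
  { intros i hi. apply inc_exists. destruct (Hinc i hi) as [E|E]; rewrite E; lia. }
  destruct Hb as [Hbpos [Hbsum _]]. destruct Hu as [Hupos [Husum _]].
  destruct (connect_prop m F u ubar HF Hbpos Hconn Hprop HFne Hcov) as [r Hr].
  destruct Hne as [i0 [hi0 Hne]].
  assert (hm : 0 < INR m) by (apply lt_0_INR; lia).
  assert (Hs : sumR m u = r * sumR m ubar).
  { rewrite <- sumR_scal. apply sumR_ext. auto. }
  rewrite Husum, Hbsum in Hs.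
  assert (r = 1) by (apply Rmult_eq_reg_r with (INR m); lra).
  apply Hne. rewrite Hr by auto. subst r. ring.
Qed.

Theorem theorem5 (m : nat) (F : list face) (wbar ubar : nat -> R)
  (HS : triangulated_surface m F)
  (Hubar : in_Omega m F ubar)
  (Hw : forall i, (i < m)%nat -> cot_weight F ubar i = wbar i) :
  let omega := fun (mu : nat -> R) (i : nat) => wbar i - cot_weight F mu i in
  (forall u, in_Omega m F u ->
     exists I, pw_path_integral m (in_Omega m F) omega ones u I) /\
  (forall u I J,
     pw_path_integral m (in_Omega m F) omega ones u I ->
     pw_path_integral m (in_Omega m F) omega ones u J -> I = J) /\
  (forall u I J, in_Omega m F u -> (exists i, (i < m)%nat /\ u i <> ubar i) ->
     pw_path_integral m (in_Omega m F) omega ones ubar I ->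
     pw_path_integral m (in_Omega m F) omega ones u J -> I < J).
Proof.
  intros omega.
  assert (HF : fcoords m F).
  { destruct HS as (_ & Hfaces & _). intros a b c Hin; destruct (Hfaces a b c Hin) as (?&?&?&_); auto. }
  split; [|split].
  - intros u Hu. exists (Phi m F wbar u - Phi m F wbar ones). apply exists_path; auto.
  - intros u I J HI HJ.
    rewrite (path_value m F wbar ones u I HF HI), (path_value m F wbar ones u J HF HJ). reflexivity.
  - intros u I J Hu Hne HI HJ.
    rewrite (path_value m F wbar ones ubar I HF HI), (path_value m F wbar ones u J HF HJ).
    assert (Phi m F wbar ubar < Phi m F wbar u) by (apply strict_min; auto). lra.
Qed.
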